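(* Let $G=(V,E)$ be an undirected, unweighted graph with $n=|V|$ vertices. Let $\varepsilon\in(0,\frac{1}{18}]$ and suppose that $H$ is a $(1\pm\varepsilon)$-spectral sparsifier of $G$. Then $\widehat{H}$, the unweighted version of $H$, is an $\widetilde{O}(n^{2/3})$-spanner of $G$.
   Context: A $(1\pm\varepsilon)$-spectral sparsifier of $G$ is a weighted graph $H=(V,E_H,w)$ with $E_H\subseteq E$ and positive edge weights such that $(1-\varepsilon)L_H\preceq L_G\preceq(1+\varepsilon)L_H$, where $L_G=B_G^\top B_G$ is the Laplacian of $G$ ($B_G$ the edge–vertex incidence matrix), $L_H=B_H^\top W B_H$ with $W$ the diagonal matrix of edge weights, and $A\preceq B$ means $x^\top Ax\le x^\top Bx$ for all $x\in\mathbb{R}^n$. The unweighted version $\widehat{H}$ of $H$ is the graph $(V,E_H)$ with all edge weights set to $1$. A subgraph $K$ of $G$ is a $t$-spanner of $G$ if $d_K(u,v)\le t\cdot d_G(u,v)$ for all $u,v\in V$, where $d$ denotes shortest-path distance. $\widetilde{O}(f)$ means $f\cdot\mathrm{polylog}(n)$. *)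

(* Defs.v *)
From HB Require Import structures.
From mathcomp Require Import all_boot all_order all_algebra.
From mathcomp Require Import reals exp.
Set Implicit Arguments. Unset Strict Implicit. Unset Printing Implicit Defensive.
Import Order.TTheory GRing.Theory Num.Theory.
Local Open Scope ring_scope.

Section Defs.
Variable n : nat.

Definition simple_graph (e : rel 'I_n) : Prop :=
  symmetric e /\ irreflexive e.

(* Weighted Laplacian L = B^T W B, written entrywise: weighted degree on the
   diagonal, minus the edge weight off the diagonal. *)
Definition laplacian (R : numFieldType) (e : rel 'I_n) (w : 'I_n -> 'I_n -> R)
  : 'M[R]_n :=
  \matrix_(i, j) (if i == j then \sum_(k | e i k) w i k
                  else if e i j then - w i j else 0).

Definition ulaplacian (R : numFieldType) (e : rel 'I_n) : 'M[R]_n :=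
  laplacian e (fun _ _ => 1).

Definition loewner_le (R : numFieldType) (A B : 'M[R]_n) : Prop :=
  forall x : 'cV[R]_n, (x^T *m A *m x) 0 0 <= (x^T *m B *m x) 0 0.

Definition spectral_sparsifier (R : numFieldType) (eps : R) (e h : rel 'I_n)
  (w : 'I_n -> 'I_n -> R) : Prop :=
  [/\ symmetric h /\ subrel h e,
      (forall u v, w u v = w v u),
      (forall u v, h u v -> 0 < w u v),
      loewner_le ((1 - eps) *: laplacian h w) (ulaplacian R e)
    & loewner_le (ulaplacian R e) ((1 + eps) *: laplacian h w)].

Definition walk (e : rel 'I_n) (u v : 'I_n) (l : nat) : Prop :=
  exists s : seq 'I_n, [/\ size s = l, path e u s & last u s = v].

Definition is_dist (e : rel 'I_n) (u v : 'I_n) (d : nat) : Prop :=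
  walk e u v d /\ forall l, walk e u v l -> (d <= l)%N.

(* K is a t-spanner of G: d_K(u,v) <= t * d_G(u,v) for all u, v
   (vacuous when d_G(u,v) = +oo). *)
Definition is_spanner (R : numDomainType) (g k : rel 'I_n) (t : R) : Prop :=
  forall u v dG, is_dist g u v dG ->
    exists dK, is_dist k u v dK /\ (dK%:R <= t * dG%:R).

End Defs.

(* Main.v *)
Require Import Defs.
From HB Require Import structures.
From mathcomp Require Import all_boot all_order all_algebra.
From mathcomp Require Import reals exp.
From mathcomp Require Import ring lra zify.
From Stdlib Require Import Classical.
Set Implicit Arguments. Unset Strict Implicit. Unset Printing Implicit Defensive.
Import Order.TTheory GRing.Theory Num.Theory.

Definition distn (a b : nat) := (a - b) + (b - a).

Section Comb.
Variable n : nat.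
Variable lv : 'I_n -> nat.
Variables T sig : nat.

Definition sz t := #|[set z | lv z == t]|.
Definition P t := [&& ~~ odd t, 0 < t, t < T & sz t <= sig].
Definition pc l := \sum_(t < l) P t.
Definition g l := 2 * pc l + P l.
Definition N p q := distn (g (lv p)) (g (lv q)).

Lemma P_adj l : P l -> P l.+1 -> False.
Proof. by move=> /and4P[/negP h _ _ _] /and4P[/negP h' _ _ _]; apply: h'; rewrite /= (negbTE (introN idP h)). Qed.

Lemma g_step l : g l.+1 = g l + (P l + P l.+1).
Proof. rewrite /g /pc big_ord_recr /=; lia. Qed.

Lemma delta_le1 l : P l + P l.+1 <= 1.
Proof. by case E1: (P l); case E2: (P l.+1) => //; exfalso; apply: (@P_adj l); rewrite ?E1 ?E2. Qed.

Lemma g_mono l1 l2 : l1 <= l2 -> g l1 <= g l2.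
Proof.
move=> le; rewrite -(subnK le); elim: (l2 - l1) => [|k IH] //=.
by rewrite addSn g_step (leq_trans IH) ?leq_addr.
Qed.

Lemma pc_mono l1 l2 : l1 <= l2 -> pc l1 <= pc l2.
Proof.
move=> le; rewrite -(subnK le); elim: (l2 - l1) => [|k IH] //=.
by rewrite addSn /pc big_ord_recr /= -/(pc _) (leq_trans IH) ?leq_addr.
Qed.

Lemma g_odd l : odd (g l) = P l.
Proof. by rewrite /g oddD oddM /=; case: (P l). Qed.

Lemma gK t1 t2 : P t1 -> P t2 -> t1 < t2 -> g t1 + 2 <= g t2.
Proof.
move=> p1 p2 lt; rewrite /g p1 p2.
have : pc t1.+1 <= pc t2 by apply: pc_mono.
rewrite /pc big_ord_recr /= -/(pc _) p1; lia.
Qed.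

Lemma N1_P p q : N p q = 1 -> P (lv p) || P (lv q).
Proof.
rewrite /N /distn => h.
have : odd (g (lv p)) != odd (g (lv q)).
  have [le|lt] := leqP (g (lv p)) (g (lv q)).
    have -> : g (lv q) = (g (lv p)).+1 by lia.
    by rewrite /= ; case: (odd _).
  have -> : g (lv p) = (g (lv q)).+1 by lia.
  by rewrite /= ; case: (odd _).
by rewrite !g_odd; case: (P _); case: (P _).
Qed.

Lemma side_up p : #|[set q | [&& P (lv q), lv p < lv q & N p q == 1]]| <= sig.
Proof.
set S := [set q | _].
case: (set_0Vmem S) => [->|[q0 q0S]]; first by rewrite cards0.
have sub : S \subset [set z | lv z == lv q0].
  apply/subsetP => q; rewrite !inE.
  move: q0S; rewrite inE => /and3P[pq0 lt0 /eqP n0] /and3P[pq lt /eqP n1].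
  apply/negPn/negP => ne.
  have [lt1|lt1] : lv q < lv q0 \/ lv q0 < lv q by lia.
  - have h1 := gK pq pq0 lt1. have h2 := g_mono (ltnW lt).
    move: n0; rewrite /N /distn; lia.
  - have h1 := gK pq0 pq lt1. have h2 := g_mono (ltnW lt0).
    move: n1; rewrite /N /distn; lia.
apply: leq_trans (subset_leq_card sub) _.
by move: q0S; rewrite inE => /and3P[/and4P[_ _ _ +] _ _].
Qed.

Lemma side_down p : #|[set q | [&& P (lv q), lv q < lv p & N p q == 1]]| <= sig.
Proof.
set S := [set q | _].
case: (set_0Vmem S) => [->|[q0 q0S]]; first by rewrite cards0.
have sub : S \subset [set z | lv z == lv q0].
  apply/subsetP => q; rewrite !inE.
  move: q0S; rewrite inE => /and3P[pq0 lt0 /eqP n0] /and3P[pq lt /eqP n1].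
  apply/negPn/negP => ne.
  have [lt1|lt1] : lv q < lv q0 \/ lv q0 < lv q by lia.
  - have h1 := gK pq pq0 lt1. have h2 := g_mono (ltnW lt0).
    move: n1; rewrite /N /distn; lia.
  - have h1 := gK pq0 pq lt1. have h2 := g_mono (ltnW lt).
    move: n0; rewrite /N /distn; lia.
apply: leq_trans (subset_leq_card sub) _.
by move: q0S; rewrite inE => /and3P[/and4P[_ _ _ +] _ _].
Qed.

Lemma sum_bool_card (b : pred 'I_n) : \sum_q (b q : nat) = #|[set q | b q]|.
Proof.
rewrite -sum1dep_card [RHS]big_mkcond /=; apply: eq_bigr => q _.
by case: (b q).
Qed.

Lemma one_side p : \sum_q (P (lv q) && (N p q == 1)) <= 2 * sig.
Proof.
apply: leq_trans (_ : \sum_q ([&& P (lv q), lv p < lv q & N p q == 1] +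
   [&& P (lv q), lv q < lv p & N p q == 1]) <= _).
  apply: leq_sum => q _.
  case: (P (lv q)) => //=.
  case: (ltngtP (lv p) (lv q)) => h; rewrite ?addn0 //=.
  by rewrite /N h /distn subnn.
rewrite big_split /= !sum_bool_card.
have := side_up p; have := side_down p; lia.
Qed.

Lemma M1_bound : \sum_p \sum_q (N p q == 1 : nat) <= 4 * sig * n.
Proof.
apply: leq_trans (_ : \sum_p \sum_q ((P (lv q) && (N p q == 1)) + (P (lv p) && (N q p == 1))) <= _).
  apply: leq_sum => p _; apply: leq_sum => q _.
  case: eqP => // e; have := N1_P e.
  have -> : N q p = N p q by rewrite /N /distn addnC.
  rewrite e eqxx !andbT.
  by case/orP => ->; rewrite ?leq_addr ?leq_addl.
under eq_bigr => p _ do rewrite big_split.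
rewrite big_split /= [X in _ + X <= _]exchange_big /=.
have H1 : \sum_p \sum_q (P (lv q) && (N p q == 1)) <= \sum_(p : 'I_n) 2 * sig by apply: leq_sum => p _; exact: one_side.
rewrite sum_nat_const card_ord in H1.
have H2 : \sum_q \sum_p (P (lv p) && (N q p == 1)) <= \sum_(p : 'I_n) 2 * sig by apply: leq_sum => p _; exact: one_side.
rewrite sum_nat_const card_ord in H2.
apply: leq_trans (leq_add H1 H2) _; lia.
Qed.

Lemma count_P : \sum_(t < T) (~~ odd t && (0 < t)) <= pc T + \sum_(t < T) (sig < sz t).
Proof.
rewrite /pc -big_split /=; apply: leq_sum => t _.
rewrite /P ltn_ord /=.
case: (~~ odd t) => //=; case: (0 < t) => //=.
by case: (leqP (sz t) sig).
Qed.

Lemma sum_eq_lt (a : nat) k : \sum_(t < k) (a == t) = (a < k).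
Proof.
elim: k => [|k IH]; first by rewrite big_ord0.
rewrite big_ord_recr /= IH ltnS.
by case: (ltngtP a k).
Qed.

Lemma thick_bound : (\sum_(t < T) (sig < sz t)) * sig.+1 <= n.
Proof.
rewrite big_distrl /=.
apply: leq_trans (_ : \sum_(t < T) sz t <= _).
  by apply: leq_sum => t _; case: ltnP => //=; rewrite mul1n.
apply: leq_trans (_ : \sum_(t < T) \sum_z (lv z == t : nat) <= _).
  by apply: leq_sum => t _; rewrite /sz sum_bool_card.
rewrite exchange_big /=.
apply: leq_trans (_ : \sum_(z : 'I_n) 1 <= _); last by rewrite sum_nat_const card_ord muln1.
by apply: leq_sum => z _; rewrite sum_eq_lt; case: (_ < _).
Qed.

End Comb.

Lemma even_count T : T <= 2 * \sum_(t < T) (~~ odd t && (0 < t)) + 2.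
Proof.
suff : T + odd T <= 2 * \sum_(t < T) (~~ odd t && (0 < t)) + 2 by lia.
elim: T => [|T IH]; first by [].
rewrite big_ord_recr /=.
case O: (odd T); rewrite O /= in IH *; first lia.
case: T O IH => [|T] O IH; first by rewrite /=; lia.
rewrite /=; lia.
Qed.

Lemma distn01 a b : distn a b <= 1 -> [\/ a = b, a = b.+1 | b = a.+1].
Proof.
rewrite /distn => h; have : (a = b \/ a = b.+1) \/ b = a.+1 by lia.
by case=> [[?|?]|?]; [apply: Or31|apply: Or32|apply: Or33].
Qed.

Lemma adj3 l1 l2 : l2 <= l1.+1 -> l1 <= l2.+1 -> [\/ l1 = l2, l1 = l2.+1 | l2 = l1.+1].
Proof.
move=> h1 h2; have : (l1 = l2 \/ l1 = l2.+1) \/ l2 = l1.+1 by lia.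
by case=> [[?|?]|?]; [apply: Or31|apply: Or32|apply: Or33].
Qed.

Lemma distn_addr a d : distn a (a + d) = d.
Proof. rewrite /distn; lia. Qed.
Lemma distn_addl a d : distn (a + d) a = d.
Proof. rewrite /distn; lia. Qed.

Lemma arith_final n T sig th E P : 0 < n -> 40 <= T -> 16 * n ^ 2 < T ^ 3 ->
  sig * T <= 8 * n -> 8 * n < sig.+1 * T -> th * sig.+1 <= n ->
  E <= P + th -> T <= 2 * E + 2 -> 34 * P ^ 2 <= 19 * P + 4 * sig * n -> False.
Proof.
move=> n0 T40 big s1 s2 th1 e1 e2 k.
have a1 : th * (8 * n) <= th * (sig.+1 * T) by apply: leq_mul (leqnn th) (ltnW s2).
have a2 : th * sig.+1 * T <= n * T by apply: leq_mul th1 (leqnn T).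
have a3 : 8 * th <= T.
  have : (8 * th) * n <= T * n by nia.
  by rewrite leq_pmul2r.
have b : T + 16 <= 4 * P by lia.
have c1 : 8 * T * P <= (34 * P - 19) * P by apply: leq_mul; lia.
have c2 : (34 * P - 19) * P <= 4 * sig * n by rewrite mulnBl; lia.
have c3 : 2 * T * P <= sig * n by lia.
have c4 : 2 * T * P * T <= sig * n * T by apply: leq_mul c3 (leqnn T).
have c5 : 2 * T * P * T <= 8 * n * n by nia.
have c6 : T * T * T <= 2 * T * (4 * P) * T by apply: leq_mul => //; apply: leq_mul => //; lia.
nia.
Qed.

Lemma arith_helper P M sig n : 17 * (2 * P) ^ 2 <= 19 * (2 * P) + 2 * M -> M <= 4 * sig * n ->
  34 * P ^ 2 <= 19 * P + 4 * sig * n.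
Proof.
have -> : (2 * P) ^ 2 = 4 * P ^ 2 by rewrite expnMn.
lia.
Qed.

Lemma T_facts n r : 0 < n -> n ^ 2 <= r ^ 3 -> 40 <= 40 * r /\ 16 * n ^ 2 < (40 * r) ^ 3.
Proof.
move=> n0 h.
have n2 : 0 < n ^ 2 by rewrite expn_gt0 n0.
have r3 : 0 < r ^ 3 by apply: leq_trans h.
have r0 : 0 < r by move: r3; rewrite expn_gt0 /= orbF.
split; first lia.
rewrite expnMn; lia.
Qed.

Section Reach.
Variable n : nat.
Variable h : rel 'I_n.
Variable u : 'I_n.

Fixpoint reachS (a : nat) : {set 'I_n} :=
  if a is a'.+1 then reachS a' :|: [set z | [exists p in reachS a', h p z]] else [set u].

Lemma reachS_mono a b : a <= b -> reachS a \subset reachS b.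
Proof.
move=> le; rewrite -(subnK le); elim: (b - a) => [|k IH] //=.
by apply: subset_trans IH _; rewrite ?addSn /=; apply: subsetUl.
Qed.

Lemma reach_step a p q : p \in reachS a -> h p q -> q \in reachS a.+1.
Proof. by move=> pa hpq; rewrite /= in_setU; apply/orP; right; rewrite inE; apply/existsP; exists p; rewrite pa. Qed.

Lemma u_reach a : u \in reachS a.
Proof. by apply: (subsetP (reachS_mono (leq0n a))); rewrite /= inE. Qed.

Lemma reach_walk a z : z \in reachS a -> exists l, l <= a /\ walk h u z l.
Proof.
elim: a z => [|a IH] z /=.
  by rewrite inE => /eqP ->; exists 0; split => //; exists [::].
rewrite in_setU => /orP[/IH [l [la wl]]|].
  by exists l; split => //; lia.
rewrite inE => /existsP[p /andP[pa hpz]].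
have [l [la [s [sz ps ls]]]] := IH p pa.
exists l.+1; split; first lia.
exists (rcons s z); split; first by rewrite size_rcons sz.
  by rewrite rcons_path ps ls.
by rewrite last_rcons.
Qed.

Definition lv T z := \sum_(a < T) (z \notin reachS a).

Lemma lv_u T : lv T u = 0.
Proof. by apply: big1 => a _; rewrite u_reach. Qed.

Lemma lv_le T z : lv T z <= T.
Proof.
apply: leq_trans (_ : \sum_(a < T) 1 <= _); first by apply: leq_sum => a _; case: (_ \notin _).
by rewrite sum_nat_const card_ord muln1.
Qed.

Lemma lv_edge T p q : h p q -> lv T q <= (lv T p).+1.
Proof.
move=> hpq; case: T => [|T]; first by rewrite /lv big_ord0.
rewrite /lv big_ord_recl [X in _ <= X.+1]big_ord_recr /=.
have H : \sum_(i < T) (q \notin reachS (bump 0 i)) <= \sum_(i < T) (p \notin reachS i).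
  apply: leq_sum => i _.
  case pa: (p \in reachS i); last by case: (_ \notin _).
  by rewrite /= (reach_step pa hpq).
have Hq0 : (q \notin reachS 0) <= 1 by case: (_ \notin _).
apply: (leq_trans (leq_add Hq0 H)); by rewrite add1n ltnS leq_addr.
Qed.

Lemma lv_far T v : (forall l, l < T -> ~ walk h u v l) -> lv T v = T.
Proof.
move=> nw.
rewrite /lv (eq_bigr (fun _ => 1)); first by rewrite sum_nat_const card_ord muln1.
move=> a _; case va: (v \in reachS a) => //=.
have [l [la wl]] := reach_walk va.
by exfalso; apply: (nw l) => //; apply: leq_ltn_trans la (ltn_ord a).
Qed.

End Reach.

Local Open Scope ring_scope.

Section Quad.
Variable R : realFieldType.
Variable n : nat.

Definition Qf (r : rel 'I_n) (w : 'I_n -> 'I_n -> R) (x : 'I_n -> R) : R :=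
  \sum_i \sum_j (if r i j then w i j * (x i - x j) ^+ 2 else 0).

Lemma quadE (A : 'M[R]_n) (x : 'I_n -> R) :
  ((\col_i x i)^T *m A *m (\col_i x i)) 0 0 = \sum_i \sum_j x i * A i j * x j.
Proof.
rewrite !mxE. under eq_bigr => j _ do rewrite !mxE big_distrl /=.
rewrite exchange_big /=; apply: eq_bigr => i _; apply: eq_bigr => j _.
by rewrite !mxE.
Qed.

Lemma lapE (r : rel 'I_n) (w : 'I_n -> 'I_n -> R) i j : laplacian r w i j = (if i == j then \sum_(k | r i k) w i k
                  else if r i j then - w i j else 0).
Proof. by rewrite /laplacian mxE. Qed.

Lemma quad_lap (r : rel 'I_n) (w : 'I_n -> 'I_n -> R) (x : 'I_n -> R) :
  symmetric r -> irreflexive r -> (forall i j, w i j = w j i) ->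
  ((\col_i x i)^T *m laplacian r w *m (\col_i x i)) 0 0 * 2 = Qf r w x.
Proof.
move=> rs ri ws; rewrite quadE.
have E1 : \sum_i \sum_j x i * laplacian r w i j * x j =
  \sum_i \sum_j (if r i j then w i j * (x i * x i - x i * x j) else 0).
  apply: eq_bigr => i _.
  set S := \sum_(k | r i k) w i k.
  have L2 j : laplacian r w i j = (if i == j then S else 0) + (if r i j then - w i j else 0).
    rewrite lapE; case: eqP => [<-|_]; first by rewrite ri addr0.
    by rewrite add0r.
  under eq_bigr => j _ do rewrite L2 mulrDr mulrDl.
  rewrite big_split /=.
  rewrite (bigD1 i) //= eqxx big1 ?addr0; last first.
    by move=> j /negbTE; rewrite eq_sym => ->; rewrite mulr0 mul0r.
  rewrite /S big_mkcond /= mulr_sumr mulr_suml -big_split /=.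
  apply: eq_bigr => j _; case: (r i j); last by rewrite !mulr0 !mul0r addr0.
  ring.
rewrite E1 /Qf.
have E2 : \sum_i \sum_j (if r i j then w i j * (x j * x j - x j * x i) else 0) =
  \sum_i \sum_j (if r i j then w i j * (x i * x i - x i * x j) else 0).
  rewrite exchange_big /=; apply: eq_bigr => i _; apply: eq_bigr => j _.
  by rewrite (rs j i) ws.
rewrite mulr2n mulrDr mulr1 -[X in _ + X = _]E2 -big_split /=.
apply: eq_bigr => i _; rewrite -big_split /=; apply: eq_bigr => j _.
case: (r i j); rewrite ?addr0 //; ring.
Qed.
End Quad.

Lemma normr_natB (R : realDomainType) (a b : nat) : `|a%:R - b%:R : R| = (distn a b)%:R.
Proof.
rewrite /distn. have [le|lt] := leqP a b.
  have E : (a - b = 0)%N by apply/eqP; rewrite subn_eq0.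
  by rewrite E add0n distrC -natrB // normr_nat.
have E : (b - a = 0)%N by apply/eqP; rewrite subn_eq0 ltnW.
by rewrite E addn0 -natrB ?normr_nat // ltnW.
Qed.

Lemma sqr_natB1 (R : realDomainType) (a b : nat) : (distn a b <= 1)%N ->
  (a%:R - b%:R : R) ^+ 2 = `|a%:R - b%:R|.
Proof.
move=> /distn01 [->|->|->].
- by rewrite subrr normr0 expr0n.
- by rewrite -addn1 natrD addrAC subrr add0r expr1n normr1.
- by rewrite -addn1 natrD opprD addrA subrr add0r sqrrN expr1n normrN normr1.
Qed.

Section Main.
Variable R : realFieldType.
Variable n : nat.
Variables e h : rel 'I_n.
Variable w : 'I_n -> 'I_n -> R.
Variable eps : R.
Hypothesis eps_le1 : eps <= 1.
Hypothesis eps_ge0 : 0 <= eps.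
Hypothesis HL1 : forall x, (1 - eps) * Qf h w x <= Qf e (fun _ _ => 1) x.
Hypothesis HL2 : forall x, Qf e (fun _ _ => 1) x <= (1 + eps) * Qf h w x.
Variable lvf : 'I_n -> nat.
Hypothesis lv_h : forall p q, h p q -> (lvf q <= (lvf p).+1)%N.
Hypothesis h_sym : symmetric h.
Variable gg : nat -> nat.
Variable dd : nat -> nat.
Hypothesis gg_step : forall l, gg l.+1 = (gg l + dd l)%N.
Hypothesis dd_le1 : forall l, (dd l <= 1)%N.
Variable B : nat.
Hypothesis lv_B : forall z, (lvf z <= B)%N.

Definition xv z : R := (gg (lvf z))%:R.
Definition yv (a : nat) z : R := (a < lvf z)%:R.
Definition NN p q := distn (gg (lvf p)) (gg (lvf q)).

Lemma gg_sum l : gg l = (gg 0 + \sum_(a < l) dd a)%N.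
Proof.
elim: l => [|l IH]; first by rewrite big_ord0 addn0.
by rewrite gg_step IH big_ord_recr /= addnA.
Qed.

Lemma gg_cut l : (l <= B)%N -> gg l = (gg 0 + \sum_(a < B) dd a * (a < l))%N.
Proof.
move=> lB; rewrite gg_sum; congr (_ + _)%N.
rewrite (big_ord_widen B dd lB) big_mkcond /=; apply: eq_bigr => a _.
by case: (a < l)%N; rewrite ?muln1 ?muln0.
Qed.

Lemma xv_cut z : xv z = (gg 0)%:R + \sum_(a < B) (dd a)%:R * yv a z.
Proof. by rewrite /xv (gg_cut (lv_B z)) natrD natr_sum; congr (_ + _); apply: eq_bigr => a _; rewrite natrM. Qed.

Lemma cut_sq p q : \sum_(a < B) (dd a)%:R * (yv a p - yv a q) ^+ 2 = `|xv p - xv q|.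
Proof.
wlog le : p q / (lvf p <= lvf q)%N.
  move=> W; have [le|lt] := leqP (lvf p) (lvf q); first exact: W.
  rewrite distrC -(W q p (ltnW lt)); apply: eq_bigr => a _.
  by rewrite -sqrrN opprB.
have E : forall a, (yv a p - yv a q) ^+ 2 = yv a q - yv a p.
  move=> a; rewrite /yv.
  case: (ltnP a (lvf p)) => ap; case: (ltnP a (lvf q)) => aq /=.
  - by rewrite subrr expr0n.
  - by move: (leq_trans ap (leq_trans le aq)); rewrite ltnn.
  - by rewrite sub0r sqrrN expr1n subr0.
  - by rewrite subrr expr0n.
under eq_bigr => a _ do rewrite E.
have -> : xv p - xv q = - \sum_(a < B) (dd a)%:R * (yv a q - yv a p).
  rewrite !xv_cut.
  have -> : \sum_(a < B) (dd a)%:R * (yv a q - yv a p) = \sum_(a < B) (dd a)%:R * yv a q - \sum_(a < B) (dd a)%:R * yv a p.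
    by rewrite -sumrB; apply: eq_bigr => a _; rewrite mulrBr.
  by rewrite opprB opprD addrACA subrr add0r.
rewrite normrN ger0_norm //; apply: sumr_ge0 => a _; apply: mulr_ge0 => //.
rewrite subr_ge0 /yv ler_nat.
by case: (ltnP a (lvf p)) => //= ap; rewrite (leq_trans ap le).
Qed.

Lemma gg_dist1 l1 l2 : (l2 <= l1.+1)%N -> (l1 <= l2.+1)%N -> (distn (gg l1) (gg l2) <= 1)%N.
Proof.
move=> h1 h2; case: (adj3 h1 h2) => [->|->|->].
- by rewrite /distn subnn.
- by rewrite gg_step distn_addl.
- by rewrite gg_step distn_addr.
Qed.

Lemma h_edge_sq p q : h p q -> (xv p - xv q) ^+ 2 = `|xv p - xv q|.
Proof.
move=> hpq; apply: sqr_natB1; apply: gg_dist1; first exact: lv_h.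
by apply: lv_h; rewrite h_sym.
Qed.

Lemma Qh_cut : Qf h w xv = \sum_(a < B) (dd a)%:R * Qf h w (yv a).
Proof.
rewrite /Qf.
have E : forall p q, (if h p q then w p q * (xv p - xv q) ^+ 2 else 0) =
   \sum_(a < B) (dd a)%:R * (if h p q then w p q * (yv a p - yv a q) ^+ 2 else 0).
  move=> p q; case: ifP => hpq; last by rewrite big1 // => a _; rewrite mulr0.
  rewrite h_edge_sq // -cut_sq mulr_sumr; apply: eq_bigr => a _.
  by rewrite mulrCA.
under eq_bigr => p _ do under eq_bigr => q _ do rewrite E.
under eq_bigr => p _ do rewrite exchange_big /=.
rewrite exchange_big /=; apply: eq_bigr => a _.
rewrite mulr_sumr; apply: eq_bigr => p _; by rewrite mulr_sumr.
Qed.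

Lemma Qe_cut : \sum_(a < B) (dd a)%:R * Qf e (fun _ _ => 1) (yv a) =
   \sum_p \sum_q (if e p q then (NN p q)%:R else 0).
Proof.
rewrite /Qf.
have E : forall p q, (if e p q then (NN p q)%:R else 0 : R) =
   \sum_(a < B) (dd a)%:R * (if e p q then 1 * (yv a p - yv a q) ^+ 2 else 0).
  move=> p q; case: ifP => epq; last by rewrite big1 // => a _; rewrite mulr0.
  rewrite /NN -normr_natB -/(xv p) -/(xv q) -cut_sq; apply: eq_bigr => a _.
  by rewrite mul1r.
under [RHS]eq_bigr => p _ do under eq_bigr => q _ do rewrite E.
under [RHS]eq_bigr => p _ do rewrite exchange_big /=.
rewrite [RHS]exchange_big /=; apply: eq_bigr => a _.
rewrite mulr_sumr; apply: eq_bigr => p _; by rewrite mulr_sumr.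
Qed.

Lemma Qe_x : Qf e (fun _ _ => 1) xv = \sum_p \sum_q (if e p q then (NN p q)%:R ^+ 2 else 0).
Proof.
rewrite /Qf; apply: eq_bigr => p _; apply: eq_bigr => q _.
case: ifP => // _; rewrite mul1r -real_normK ?num_real //.
by rewrite /xv normr_natB.
Qed.

Lemma key_ineq : (1 - eps) * \sum_p \sum_q (if e p q then (NN p q)%:R ^+ 2 else 0)
   <= (1 + eps) * \sum_p \sum_q (if e p q then (NN p q)%:R else 0).
Proof.
rewrite -Qe_x -Qe_cut.
have e1 : 0 <= 1 - eps by rewrite subr_ge0.
have e2 : 0 <= 1 + eps by apply: addr_ge0.
apply: le_trans (_ : (1 - eps) * ((1 + eps) * Qf h w xv) <= _).
  by apply: ler_wpM2l => //; apply: HL2.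
rewrite mulrCA; apply: ler_wpM2l => //.
rewrite Qh_cut mulr_sumr; apply: ler_sum => a _.
by rewrite mulrCA; apply: ler_wpM2l => //; apply: HL1.
Qed.

End Main.

Lemma psi_ge0 (R : realFieldType) (eps : R) (N : nat) : 0 <= eps -> eps <= 1/3 ->
  0 <= (1 - eps) * N%:R ^+ 2 - (1 + eps) * N%:R + 2 * eps * (N == 1)%:R.
Proof.
move=> e0 e3; case: N => [|[|N]].
- rewrite /= mulr0n expr0n /=; lra.
- rewrite /= mulr1n expr1n; lra.
- rewrite /= mulr0 addr0.
  have h2 : (2 : R) <= N.+2%:R by rewrite ler_nat.
  have -> : (1 - eps) * N.+2%:R ^+ 2 - (1 + eps) * N.+2%:R = N.+2%:R * ((1 - eps) * N.+2%:R - (1 + eps)) by ring.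
  apply: mulr_ge0; first exact: ler0n.
  nra.
Qed.

Lemma single_le (R : realFieldType) n (F : 'I_n -> 'I_n -> R) u v :
  (forall p q, 0 <= F p q) -> F u v <= \sum_p \sum_q F p q.
Proof.
move=> F0; rewrite (bigD1 u) //= (bigD1 v) //= -addrA lerDl.
by apply: addr_ge0; apply: sumr_ge0 => p _ //; apply: sumr_ge0.
Qed.

Lemma phi_step (R : realFieldType) (eps : R) n (e : rel 'I_n) (NNf : 'I_n -> 'I_n -> nat) u v :
  0 <= eps -> eps <= 1/18 -> e u v ->
  (1 - eps) * \sum_p \sum_q (if e p q then (NNf p q)%:R ^+ 2 else 0)
   <= (1 + eps) * \sum_p \sum_q (if e p q then (NNf p q)%:R else 0 : R) ->
  (17 * (NNf u v) ^ 2 <= 19 * NNf u v + 2 * \sum_p \sum_q (NNf p q == 1 : nat))%N.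
Proof.
move=> e0 e18 euv key.
set psi := fun N : nat => (1 - eps) * N%:R ^+ 2 - (1 + eps) * N%:R + 2 * eps * (N == 1)%:R.
have e3 : eps <= 1/3 by lra.
have S1 : psi (NNf u v) <= \sum_p \sum_q (if e p q then psi (NNf p q) else 0).
  have := @single_le _ _ (fun p q => if e p q then psi (NNf p q) else 0) u v.
  rewrite euv; apply => p q; case: (e p q) => //; exact: psi_ge0.
have S2 : \sum_p \sum_q (if e p q then psi (NNf p q) else 0) =
   ((1 - eps) * \sum_p \sum_q (if e p q then (NNf p q)%:R ^+ 2 else 0)
    - (1 + eps) * \sum_p \sum_q (if e p q then (NNf p q)%:R else 0 : R))
   + 2 * eps * \sum_p \sum_q (if e p q then (NNf p q == 1)%:R else 0 : R).
  rewrite !mulr_sumr -sumrB -big_split /=; apply: eq_bigr => p _.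
  rewrite !mulr_sumr -sumrB -big_split /=; apply: eq_bigr => q _.
  by case: (e p q); rewrite /psi //; rewrite !mulr0 subrr addr0.
have S3 : \sum_p \sum_q (if e p q then (NNf p q == 1)%:R else 0 : R) <=
    (\sum_p \sum_q (NNf p q == 1 : nat))%:R.
  rewrite natr_sum; apply: ler_sum => p _; rewrite natr_sum; apply: ler_sum => q _.
  by case: (e p q) => //; exact: ler0n.
set M := (\sum_p \sum_q (NNf p q == 1 : nat)) in S3 *.
set m := NNf u v in S1 *.
have H : psi m <= 2 * eps * M%:R.
  apply: le_trans S1 _; rewrite S2.
  have : 0 <= 2 * eps by lra.
  move=> h2; have := ler_wpM2l h2 S3; lra.
rewrite -(ler_nat R) !natrD !natrM ?natrX.
move: H; rewrite /psi.
have m0 : (0 : R) <= m%:R by exact: ler0n.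
have M0 : (0 : R) <= M%:R by exact: ler0n.
have b : (m == 1)%:R <= (1 : R) by case: (m == 1).
have b0 : (0 : R) <= (m == 1)%:R by case: (m == 1).
move=> H.
nra.
Qed.

Lemma quad_scale (R : realFieldType) n (c : R) (L : 'M[R]_n) (X : 'cV[R]_n) :
  (X^T *m (c *: L) *m X) 0 0 = c * (X^T *m L *m X) 0 0.
Proof. by rewrite -scalemxAr -scalemxAl mxE. Qed.

Lemma loewner_Qf (R : realFieldType) n (e h : rel 'I_n) (w : 'I_n -> 'I_n -> R) (eps : R) :
  simple_graph e -> spectral_sparsifier eps e h w ->
  (forall x, (1 - eps) * Qf h w x <= Qf e (fun _ _ => 1) x) /\
  (forall x, Qf e (fun _ _ => 1) x <= (1 + eps) * Qf h w x).
Proof.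
move=> [es ei] [[hs hsub] ws wp L1 L2].
have hi : irreflexive h by move=> z; apply/negP => /hsub; rewrite ei.
split => x.
- have := L1 (\col_i x i); rewrite quad_scale.
  rewrite -(quad_lap x hs hi ws) -(@quad_lap R n e (fun _ _ => 1) x es ei (fun _ _ => erefl)) /ulaplacian.
  by move=> H; rewrite mulrA ler_pM2r //.
- have := L2 (\col_i x i); rewrite quad_scale.
  rewrite -(quad_lap x hs hi ws) -(@quad_lap R n e (fun _ _ => 1) x es ei (fun _ _ => erefl)) /ulaplacian.
  by move=> H; rewrite mulrA ler_pM2r //.
Qed.

Lemma edge_walk (R : realFieldType) n (e h : rel 'I_n) (w : 'I_n -> 'I_n -> R) (eps : R) u v T :
  simple_graph e -> 0 < eps -> eps <= 1/18 -> spectral_sparsifier eps e h w -> e u v ->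
  (40 <= T)%N -> (16 * n ^ 2 < T ^ 3)%N -> exists l, (l < T)%N /\ walk h u v l.
Proof.
move=> sg e0 e18 sp euv T40 big.
case: (classic (exists l, (l < T)%N /\ walk h u v l)) => // nw; exfalso.
have far : forall l, (l < T)%N -> ~ walk h u v l by move=> l lT wl; apply: nw; exists l.
have [HL1 HL2] := loewner_Qf sg sp.
have [[hs hsub] _ _ _ _] := sp.
set lvf := lv h u T.
have lv_h' : forall p q, h p q -> (lvf q <= (lvf p).+1)%N by move=> p q; exact: lv_edge.
set sig := ((8 * n) %/ T)%N.
have e1 : eps <= 1 by lra.
have e0' : 0 <= eps by lra.
have key := key_ineq e1 e0' HL1 HL2 lv_h' hs (g_step lvf T sig) (delta_le1 lvf T sig) (lv_le h u T).
have ph := phi_step e0' e18 euv key.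
have luv : lvf u = 0%N by exact: lv_u.
have lvv : lvf v = T by exact: lv_far.
have Nuv : distn (g lvf T sig (lvf u)) (g lvf T sig (lvf v)) = (2 * pc lvf T sig T)%N.
  have P0f : P lvf T sig 0 = false by [].
  have PTf : P lvf T sig T = false by rewrite /P ltnn !andbF.
  rewrite luv lvv /g -/(pc lvf T sig T) P0f PTf /pc big_ord0.
  by rewrite /distn !addn0 sub0n add0n subn0.
have M1 := M1_bound lvf T sig.
rewrite {1 2}/NN Nuv in ph.
have n0 : (0 < n)%N by apply: leq_ltn_trans (leq0n u) (ltn_ord u).
have T0 : (0 < T)%N by apply: leq_trans T40.
apply: (@arith_final n T sig (\sum_(t < T) (sig < sz lvf t))%N (\sum_(t < T) (~~ odd t && (0 < t)))%N (pc lvf T sig T)) => //.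
- exact: leq_divM.
- by rewrite ltn_ceil.
- exact: thick_bound.
- exact: count_P.
- exact: even_count.
- move: ph M1; rewrite /N; set P0 := pc lvf T sig T; set M := (\sum_p _)%N; move=> ph M1.
  exact: (@arith_helper P0 M sig n).
Qed.

Lemma walk0 n (h : rel 'I_n) a : walk h a a 0.
Proof. by exists [::]. Qed.

Lemma walk_cat n (h : rel 'I_n) a b c l1 l2 :
  walk h a b l1 -> walk h b c l2 -> walk h a c (l1 + l2).
Proof.
move=> [s1 [sz1 p1 e1]] [s2 [sz2 p2 e2]]; exists (s1 ++ s2); split.
- by rewrite size_cat sz1 sz2.
- by rewrite cat_path p1 e1 p2.
- by rewrite last_cat e1 e2.
Qed.

Lemma walk_lift n (e h : rel 'I_n) K a b d :
  (forall x y, e x y -> exists l, (l <= K)%N /\ walk h x y l) ->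
  walk e a b d -> exists L, (L <= d * K)%N /\ walk h a b L.
Proof.
move=> ed [s [<- ps ls]].
elim: s a ps ls => [|y s IH] a /=.
  by move=> _ <-; exists 0%N; split => //; exact: walk0.
move=> /andP[eay ps] ls.
have [L [LK wL]] := IH y ps ls.
have [l [lK wl]] := ed a y eay.
exists (l + L)%N; split; last exact: walk_cat wl wL.
by rewrite mulSn leq_add.
Qed.

Lemma dist_exists_aux n (h : rel 'I_n) a b L : forall L', (L' <= L)%N -> walk h a b L' ->
  exists d, is_dist h a b d /\ (d <= L')%N.
Proof.
elim: L => [|L IH] L' le wL'.
  have L0 : L' = 0%N by apply/eqP; rewrite -leqn0.
  by exists 0%N; split => //; split; first by rewrite -L0.
case: (classic (exists l, (l < L')%N /\ walk h a b l)) => [[l [lL wl]]|nw].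
  have lL' : (l <= L)%N by rewrite -ltnS (leq_trans lL le).
  have [d [dd dl]] := IH l lL' wl.
  by exists d; split => //; apply: leq_trans dl (ltnW lL).
exists L'; split => //; split => // l wl.
by case: (leqP L' l) => // lt; exfalso; apply: nw; exists l.
Qed.

Lemma dist_exists n (h : rel 'I_n) a b L : walk h a b L -> exists d, is_dist h a b d /\ (d <= L)%N.
Proof. exact: (@dist_exists_aux n h a b L L (leqnn L)). Qed.

Lemma pow23_cube (R : realType) (n : nat) : (n%:R `^ (2/3) : R) ^+ 3 = n%:R ^+ 2.
Proof.
rewrite -powR_mulrn ?powR_ge0 // -powRrM.
have -> : (2 / 3 * 3%:R : R) = 2%:R by field.
by rewrite powR_mulrn // ler0n.
Qed.

Lemma r_bound (R : realType) n r : (0 < n)%N -> (r.-1 ^ 3 < n ^ 2)%N ->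
  (r%:R : R) <= 2 * n%:R `^ (2/3).
Proof.
move=> n0 lt.
set y := (n%:R `^ (2/3) : R).
have y1 : 1 <= y.
  have n1 : (1 : R) <= n%:R by rewrite ler1n.
  have h := @ler_powR R _ n1 0 (2/3).
  rewrite powRr0 in h; apply: h; lra.
have ry : (r.-1)%:R < y.
  rewrite ltNge; apply/negP => H.
  have y0 : 0 <= y by lra.
  have H3 : y ^+ 3 <= (r.-1)%:R ^+ 3.
    rewrite !exprS expr0 !mulr1.
    apply: ler_pM => //; first by apply: mulr_ge0.
    by apply: ler_pM.
  move: H3; rewrite /y pow23_cube -!natrX ler_nat leqNgt.
  by rewrite lt.
have : (r%:R : R) <= (r.-1)%:R + 1.
  by rewrite natr1 ler_nat; case: r {lt ry}.
lra.
Qed.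

Unset Implicit Arguments.
Theorem theorem1p1 (R : realType) :
  exists (C : R) (k : nat), 0 < C /\
  forall (n : nat) (e h : rel 'I_n) (w : 'I_n -> 'I_n -> R) (eps : R),
    simple_graph e ->
    0 < eps -> eps <= 1 / 18 ->
    spectral_sparsifier eps e h w ->
    is_spanner e h (C * (n%:R `^ (2 / 3)) * (ln (n.+1)%:R) ^+ k).
Proof.
exists 80, 0%N; split; first lra.
move=> n e h w eps sg e0 e18 sp u v dG [wG _].
have n0 : (0 < n)%N := leq_ltn_trans (leq0n u) (ltn_ord u).
have ex : exists r, (n ^ 2 <= r ^ 3)%N.
  by exists n; apply: leq_pexp2l.
case: (ex_minnP ex) => r rP rmin.
have [T40 big] := T_facts n0 rP.
have r0 : (0 < r)%N.
  by rewrite -(ltn_pmul2l (isT : (0 < 40)%N)) muln0; apply: leq_trans T40.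
have rlt : (r.-1 ^ 3 < n ^ 2)%N.
  rewrite ltnNge; apply/negP => H; have le := rmin _ H.
  by move: le r0; case: (r) => // r'; rewrite /= ltnn.
have edge : forall x y, e x y -> exists l, (l <= 40 * r)%N /\ walk h x y l.
  move=> x y exy; have [l [lT wl]] := edge_walk sg e0 e18 sp exy T40 big.
  by exists l; split => //; apply: ltnW.
have [L [LdG wL]] := walk_lift edge wG.
have [dK [dd dl]] := dist_exists wL.
exists dK; split => //.
rewrite expr0 mulr1.
have h1 : (dK%:R : R) <= dG%:R * (40 * r)%:R by rewrite -natrM ler_nat (leq_trans dl LdG).
have h2 : ((40 * r)%:R : R) <= 80 * n%:R `^ (2 / 3).
  have := r_bound R n0 rlt; rewrite natrM; lra.
apply: le_trans h1 _; rewrite mulrC; apply: ler_wpM2r => //; exact: ler0n.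
Qed.
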